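(* Let $\mathcal{P}$ be a partition of $\mathbb{F}_q^k$, $t$ a positive integer, and suppose $(U,\phi)$ is a block-preserving contraction of $\mathcal{P}$. Then $$r_{\mathcal{P}}(k,t)=N\big(\mathcal{D}_{\mathcal{P}}(t;\,u: u\in U)\big).$$
   Context: $d$ is Hamming distance. A block-preserving contraction of $\mathcal{P}$ is a pair $(U,\phi)$ with $U\subseteq\mathbb{F}_q^k$ and $\phi:\mathbb{F}_q^k\to U$ such that (i) $\phi(u)$ lies in the same block of $\mathcal{P}$ as $u$ for every $u$, and (ii) $d(\phi(u),\phi(v))\le d(u,v)$ whenever $u,v$ lie in different blocks of $\mathcal{P}$. A $(\mathcal{P},t)$-encoding with redundancy $r$ is a systematic map $\mathcal{C}:\mathbb{F}_q^k\to\mathbb{F}_q^{k+r}$, $\mathcal{C}(u)=(u,p(u))$, with $d(\mathcal{C}(u),\mathcal{C}(v))\ge 2t+1$ whenever $u,v$ lie in different blocks; $r_{\mathcal{P}}(k,t)$ is the minimum such $r$. For a finite set of distinct vectors (listed in some order) $u_1,\ldots,u_M$, $\mathcal{D}_{\mathcal{P}}(t;u_1,\ldots,u_M)$ is the $M\times M$ matrix with $(i,j)$ entry $\max(2t+1-d(u_i,u_j),0)$ if $u_i,u_j$ lie in different blocks and $0$ otherwise. For $D\in\mathbb{N}^{M\times M}$, $N(D)$ is the smallest $r\ge0$ such that there exist $z_1,\ldots,z_M\in\mathbb{F}_q^r$ with $d(z_i,z_j)\ge D_{i,j}$ for all $i\ne j$. *)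

(* Defs.v *)
From HB Require Import structures.
From mathcomp Require Import all_boot all_order all_algebra.
From Stdlib Require Import ClassicalEpsilon.
Set Implicit Arguments. Unset Strict Implicit. Unset Printing Implicit Defensive.

Definition hdist (T : eqType) (n : nat) (u v : 'rV[T]_n) : nat :=
  #|[set i : 'I_n | u ord0 i != v ord0 i]|.

(* The least natural number satisfying a predicate (chosen classically;
   it is the genuine minimum whenever the predicate is satisfiable). *)
Definition least (Q : nat -> Prop) : nat :=
  epsilon (inhabits 0%N) (fun m => Q m /\ forall r, Q r -> (m <= r)%N).

Section Defs.
Variables (F : finFieldType) (k : nat).
Implicit Types (P : {set {set 'rV[F]_k}}).

Definition diff_block P (u v : 'rV[F]_k) : bool := pblock P u != pblock P v.

Definition block_preserving_contraction P (U : {set 'rV[F]_k})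
    (phi : 'rV[F]_k -> 'rV[F]_k) : Prop :=
  (forall u, phi u \in U) /\
  (forall u, phi u \in pblock P u) /\
  (forall u v, diff_block P u v -> (hdist (phi u) (phi v) <= hdist u v)%N).

Definition has_encoding P (t r : nat) : Prop :=
  exists p : 'rV[F]_k -> 'rV[F]_r,
    forall u v, diff_block P u v ->
      (2 * t + 1 <= hdist (row_mx u (p u)) (row_mx v (p v)))%N.

Definition r_P P (t : nat) : nat := least (has_encoding P t).

(* D_P(t; u_1,...,u_M) for the elements of U listed in the order enum U *)
Definition D_P P (t : nat) (U : {set 'rV[F]_k}) : 'M[nat]_#|U| :=
  \matrix_(i, j)
    if diff_block P (enum_val i) (enum_val j)
    then (2 * t + 1 - hdist (enum_val i) (enum_val j))%N  (* = max(.,0) *)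
    else 0%N.
End Defs.

Definition N_feasible (F : finFieldType) (M : nat) (D : 'M[nat]_M) (r : nat)
    : Prop :=
  exists z : 'I_M -> 'rV[F]_r,
    forall i j, i != j -> (D i j <= hdist (z i) (z j))%N.

Definition N_of (F : finFieldType) (M : nat) (D : 'M[nat]_M) : nat :=
  least (N_feasible F D).

(* Main.v *)
Require Import Defs.
From mathcomp Require Import all_boot all_order all_algebra.
From mathcomp Require Import zify.
From Stdlib Require Import FunctionalExtensionality PropExtensionality.

Lemma hdist_row_mx (T : eqType) (m n : nat) (a c : 'rV[T]_m) (b d : 'rV[T]_n) :
  hdist (row_mx a b) (row_mx c d) = (hdist a c + hdist b d)%N.
Proof.
rewrite /hdist.
have E : forall l (x y : 'rV[T]_l),
  #|[set i : 'I_l | x ord0 i != y ord0 i]| = \sum_(i < l) (x ord0 i != y ord0 i : nat).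
  move=> l x y; rewrite -sum1_card big_mkcond /=; apply: eq_bigr => i _.
  by rewrite inE; case: (x ord0 i != y ord0 i).
rewrite !E big_split_ord /=.
by congr (_ + _)%N; apply: eq_bigr => i _; rewrite ?row_mxEl ?row_mxEr.
Qed.

Lemma least_ext (Q1 Q2 : nat -> Prop) : (forall r, Q1 r <-> Q2 r) -> least Q1 = least Q2.
Proof.
move=> H; have -> // : Q1 = Q2.
by apply: functional_extensionality => r; apply: propositional_extensionality.
Qed.

Theorem theorem8 (F : finFieldType) (k : nat) (P : {set {set 'rV[F]_k}})
    (t : nat) (U : {set 'rV[F]_k}) (phi : 'rV[F]_k -> 'rV[F]_k) :
  partition P [set: 'rV[F]_k] ->
  (0 < t)%N ->
  block_preserving_contraction P U phi ->
  r_P P t = N_of F (D_P P t U).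
Proof.
move=> HP _ [HU [Hblk Hd]].
rewrite /r_P /N_of; apply: least_ext => r; split.
- case=> p Hp; exists (fun i => p (enum_val i)) => i j _.
  rewrite /D_P mxE; case: ifP => // Hdiff.
  have := Hp _ _ Hdiff; rewrite hdist_row_mx => H; rewrite leq_subLR; exact: H.
- case=> z Hz.
  have Ux0 : phi 0%R \in U := HU 0%R.
  exists (fun u => z (enum_rank_in Ux0 (phi u))) => u v Huv.
  have Htriv : trivIset P by case/and3P: HP.
  have Hcov : forall x, pblock P x \in P.
    by move=> x; apply: pblock_mem; rewrite (cover_partition HP) inE.
  have Epu : pblock P (phi u) = pblock P u by apply: def_pblock.
  have Epv : pblock P (phi v) = pblock P v by apply: def_pblock.
  have Hd' : diff_block P (phi u) (phi v) by rewrite /diff_block Epu Epv.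
  set i := enum_rank_in Ux0 (phi u); set j := enum_rank_in Ux0 (phi v).
  have Ei : enum_val i = phi u by rewrite /i enum_rankK_in.
  have Ej : enum_val j = phi v by rewrite /j enum_rankK_in.
  have Hij : i != j.
    apply/eqP => Eij; move: Hd'; rewrite /diff_block -Ei -Ej Eij eqxx //.
  have := Hz i j Hij; rewrite /D_P mxE Ei Ej Hd' leq_subLR => H.
  rewrite hdist_row_mx; apply: leq_trans H _; rewrite leq_add2r; exact: Hd.
Qed.
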